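(* Let $K\ge L\ge T\ge 2$ be integers, let $\kappa,\lambda$ be the smallest non-negative integers such that $K+1+\kappa$ and $L+1+\lambda$ are coprime to $T-1$, and put $K^\star=K+1+\kappa$, $L^\star=L+1+\lambda$, $\bar T=T-1$, $q=K^\star L^\star+\bar T^2$. Let $x$ be a positive integer coprime to $q$ and $y\in\{0,\dots,q-1\}$ the unique integer with $x\bar T+yK^\star\equiv 0\pmod q$. Then every integer solution $(i,j)$ of $ix\equiv jy\pmod q$ is of the form $i=-a\bar T+bL^\star$, $j=aK^\star+b\bar T$ for some integers $a,b$. *)

(* Defs.v *)
From mathcomp Require Import all_boot all_order all_algebra.
Set Implicit Arguments. Unset Strict Implicit. Unset Printing Implicit Defensive.

Definition least_coprime_shift (m n k : nat) : Prop :=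
  coprime (m + 1 + k) n /\ (forall k', k' < k -> ~~ coprime (m + 1 + k') n).

(* Main.v *)
Require Import Defs.
From mathcomp Require Import all_boot all_order all_algebra.
From mathcomp Require Import ring.
Import GRing.Theory Num.Theory.
Local Open Scope ring_scope.

Theorem lemma5 (K L T kappa lambda x y : nat)
  (hLK : (L <= K)%N) (hTL : (T <= L)%N) (hT : (2 <= T)%N)
  (hkappa : least_coprime_shift K (T - 1) kappa)
  (hlambda : least_coprime_shift L (T - 1) lambda)
  (hx : (0 < x)%N)
  (hxq : coprime x ((K + 1 + kappa) * (L + 1 + lambda) + (T - 1) ^ 2))
  (hy : (y < (K + 1 + kappa) * (L + 1 + lambda) + (T - 1) ^ 2)%N)
  (hxy : (x * (T - 1) + y * (K + 1 + kappa)
            = 0 %[mod (K + 1 + kappa) * (L + 1 + lambda) + (T - 1) ^ 2])%N) :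
  forall i j : int,
    (i * x%:Z = j * y%:Z %[mod ((K + 1 + kappa) * (L + 1 + lambda) + (T - 1) ^ 2)%N%:Z])%Z ->
    exists a b : int,
      i = - a * (T - 1)%N%:Z + b * (L + 1 + lambda)%N%:Z /\
      j = a * (K + 1 + kappa)%N%:Z + b * (T - 1)%N%:Z.
Proof.
move: hxq hxy; case: hkappa => hA _ {hlambda}.
set A := (K + 1 + kappa)%N in hA *; set B := (L + 1 + lambda)%N; set t := (T - 1)%N.
move=> hxq hxy i j hij.
have hq : (A%:Z * B%:Z + t%:Z ^+ 2 = (A * B + t ^ 2)%N%:Z :> int) by rewrite PoszD PoszM expnS expn1 PoszM expr2.
have dxy : ((A * B + t ^ 2)%N%:Z %| x%:Z * t%:Z + y%:Z * A%:Z)%Z.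
  rewrite -!PoszM -PoszD /dvdz /=; by apply/eqP; rewrite hxy mod0n.
have dij : ((A * B + t ^ 2)%N%:Z %| i * x%:Z - j * y%:Z)%Z.
  by rewrite -eqz_mod_dvd; apply/eqP.
have cxq : coprimez (A * B + t ^ 2)%N%:Z x%:Z by rewrite coprimezE /= coprime_sym.
have cAq : coprimez (A * B + t ^ 2)%N%:Z A%:Z.
  by rewrite coprimezE /= coprime_sym /coprime mulnC gcdnMDl -/(coprime _ _) coprimeXr.
have d1 : ((A * B + t ^ 2)%N%:Z %| A%:Z * i + t%:Z * j)%Z.
  rewrite -(Gauss_dvdzl _ cxq).
  have -> : (A%:Z * i + t%:Z * j) * x%:Z
    = A%:Z * (i * x%:Z - j * y%:Z) + j * (x%:Z * t%:Z + y%:Z * A%:Z) by ring.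
  by apply: rpredD; apply: dvdz_mull.
have d2 : ((A * B + t ^ 2)%N%:Z %| B%:Z * j - t%:Z * i)%Z.
  rewrite -(Gauss_dvdzl _ cAq).
  have -> : (B%:Z * j - t%:Z * i) * A%:Z
    = j * (A * B + t ^ 2)%N%:Z - t%:Z * (A%:Z * i + t%:Z * j) by rewrite -hq; ring.
  by apply: rpredB; apply: dvdz_mull; rewrite ?dvdzz.
case/dvdzP: d1 => b hb; case/dvdzP: d2 => a ha.
have q0 : (A * B + t ^ 2)%N%:Z != 0.
  rewrite eqz_nat -lt0n addn_gt0 orbC expn_gt0 /t subn_gt0; by rewrite (leq_trans _ hT).
exists a, b; split; apply: (mulIf q0) => /=.
  transitivity (- (a * (A * B + t ^ 2)%N%:Z) * t%:Z + (b * (A * B + t ^ 2)%N%:Z) * B%:Z); last by ring.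
  by rewrite -ha -hb -hq; ring.
transitivity ((a * (A * B + t ^ 2)%N%:Z) * A%:Z + (b * (A * B + t ^ 2)%N%:Z) * t%:Z); last by ring.
by rewrite -ha -hb -hq; ring.
Qed.
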